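(* Let $0<p<1/2$ be a constant and let $T$ be a tree with $n$ edges accessed through a 2-sided noisy oracle with error probability $p$. Consider the following algorithm, run with parameters $\varepsilon=\delta=0.01$: set $c=\lceil \log_{\frac{1-p}{p}}(1/\delta)\rceil$ and a global budget $B=\lceil \frac{1}{\varepsilon}\cdot\frac{1}{1-2p}\rceil\cdot c\cdot n$; process the edges of $T$ in a fixed order; for the current edge, starting a counter at $0$, while the counter is $<c$ and $B>0$, query the edge, decrease $B$ by $1$, and add $+1$ to the counter on ``Yes'' and $-1$ on ``No''; after the loop, if $B=0$ output False and stop, otherwise continue to the next edge; if all edges are processed output True. Then this algorithm outputs True on connected trees with probability at least $0.99$, outputs False on disconnected trees with probability at least $0.99$, and uses $O(n)$ queries.
   Context: Noisy edge-query model: each edge is either realized or non-realized (fixed arbitrarily in advance). An oracle answers queries ``Is edge $e$ realized?'' with ``Yes''/``No''; each query costs $1$; answers to distinct queries (including repeated queries of the same edge) are independent. In the 2-sided error regime each answer is wrong with probability $p<1/2$ (a constant) and correct with probability $1-p$. A tree is connected if all its edges are realized and disconnected otherwise. *)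

(* Defs.v *)
From HB Require Import structures.
From mathcomp Require Import all_boot all_order all_algebra.
From mathcomp Require Import reals exp.
Set Implicit Arguments. Unset Strict Implicit. Unset Printing Implicit Defensive.
Import Order.TTheory GRing.Theory Num.Theory.
Local Open Scope ring_scope.

(* A tree on the finite vertex type V, given by its list of edges E (2-element
   vertex sets), in the fixed order in which the algorithm processes them. *)
Definition tree_adj (V : finType) (E : seq {set V}) : rel V :=
  fun x y => (x != y) && has (fun e : {set V} => (x \in e) && (y \in e)) E.

Definition is_tree (V : finType) (E : seq {set V}) : Prop :=
  [/\ uniq E, all (fun e : {set V} => #|e| == 2)%N E, #|V| = (size E).+1
    & forall x y : V, connect (tree_adj E) x y].

(* r e = true iff edge e is realized; the tree is connected iff all its edges
   are realized. *)
Definition tree_connected (V : finType) (E : seq {set V}) (r : {set V} -> bool)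
  : bool := all r E.

Section Params.
Variable R : realType.

Definition c_param (p delta : R) : nat :=
  `|Num.ceil (ln (delta^-1) / ln ((1 - p) / p))|%N.

Definition budget (p eps delta : R) (n : nat) : nat :=
  (`|Num.ceil (eps^-1 * (1 - 2 * p)^-1)| * c_param p delta * n)%N.
End Params.

(* ans k = answer (true = "Yes") to the k-th query overall (k = 0,1,...).
   Inner loop on one edge: state = remaining budget, index of next query,
   counter.  Returns (remaining budget, index of next query). *)
Fixpoint edge_loop (c : nat) (ans : nat -> bool) (fuel k : nat) (cnt : int)
  : nat * nat :=
  if (cnt < c%:Z)%R then
    match fuel with
    | 0 => (0%N, k)
    | fuel'.+1 => edge_loop c ans fuel' k.+1 (if ans k then cnt + 1 else cnt - 1)
    end
  else (fuel, k).

(* answer k e = answer to the k-th query given that this query is about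
   edge e.  Returns (output, total number of queries made). *)
Fixpoint run_alg (V : finType) (c : nat) (answer : nat -> {set V} -> bool)
  (Es : seq {set V}) (fuel k : nat) : bool * nat :=
  match Es with
  | [::] => (true, k)
  | e :: Es' =>
      let (fuel', k') := edge_loop c (fun j => answer j e) fuel k 0 in
      if fuel' == 0%N then (false, k') else run_alg c answer Es' fuel' k'
  end.

(* Since the algorithm never makes more than B queries, the randomness of
   the oracle is a vector of B independent error bits: the k-th answer is
   wrong iff bit k is set; each bit is set with probability p. *)
Definition err_bit (B : nat) (w : {ffun 'I_B -> bool}) (k : nat) : bool :=
  if insub k is Some i then w i else false.

Definition noisy_answer (V : finType) (r : {set V} -> bool) (B : nat)
  (w : {ffun 'I_B -> bool}) (k : nat) (e : {set V}) : bool :=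
  r e (+) err_bit w k.

Definition weight (R : realType) (p : R) (B : nat) (w : {ffun 'I_B -> bool}) : R :=
  \prod_(i < B) (if w i then p else 1 - p).

Definition Pr (R : realType) (p : R) (B : nat) (ev : {ffun 'I_B -> bool} -> bool)
  : R := \sum_(w : {ffun 'I_B -> bool}) weight p w * (ev w)%:R.

Definition algo (R : realType) (p eps delta : R) (V : finType)
  (E : seq {set V}) (r : {set V} -> bool)
  (w : {ffun 'I_(budget p eps delta (size E)) -> bool}) : bool * nat :=
  run_alg (c_param p delta) (noisy_answer r w) E (budget p eps delta (size E)) 0.
Arguments algo {R} p eps delta {V} E r w.
Arguments Pr {R} p {B} ev.

(* Main.v *)
Require Import Defs.
From HB Require Import structures.
From mathcomp Require Import all_boot all_order all_algebra.
From mathcomp Require Import reals exp.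
From mathcomp Require Import ring lra zify.
From Stdlib Require Import FunctionalExtensionality.
Set Implicit Arguments. Unset Strict Implicit. Unset Printing Implicit Defensive.
Import Order.TTheory GRing.Theory Num.Theory.
Local Open Scope ring_scope.

Definition scons (b : bool) (s : nat -> bool) : nat -> bool :=
  fun j => if j is j'.+1 then s j' else b.

Definition Ex (R : realType) (p : R) (n : nat) (F : (nat -> bool) -> R) : R :=
  \sum_(w : {ffun 'I_n -> bool}) weight p w * F (err_bit w).

Lemma Ex0 (R : realType) (p : R) (F : (nat -> bool) -> R) :
  Ex p 0 F = F (fun _ => false).
Proof.
rewrite /Ex.
have H : forall w : {ffun 'I_0 -> bool}, weight p w * F (err_bit w) = F (fun _ => false).
  move=> w; rewrite /weight big_ord0 mul1r; congr F.
  apply: functional_extensionality => k; rewrite /err_bit.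
  by case: insubP => // -[].
rewrite (eq_bigr _ (fun w _ => H w)) sumr_const card_ffun card_ord card_bool /=.
by rewrite expn0 mulr1n.
Qed.

Definition hcons (n : nat) (bw : bool * {ffun 'I_n -> bool}) : {ffun 'I_n.+1 -> bool} :=
  [ffun i => if unlift ord0 i is Some j then bw.2 j else bw.1].
Definition htail (n : nat) (w : {ffun 'I_n.+1 -> bool}) : bool * {ffun 'I_n -> bool} :=
  (w ord0, [ffun j => w (lift ord0 j)]).

Lemma hconsK n : cancel (@hcons n) (@htail n).
Proof.
case=> b w; rewrite /htail /hcons /=; congr pair; first by rewrite ffunE unlift_none.
by apply/ffunP => j; rewrite !ffunE liftK.
Qed.

Lemma htailK n : cancel (@htail n) (@hcons n).
Proof.
move=> w; apply/ffunP => i; rewrite /hcons /htail ffunE /=.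
by case: unliftP => [j ->|->]; rewrite ?ffunE.
Qed.

Lemma err_bit_hcons n b (w : {ffun 'I_n -> bool}) :
  err_bit (hcons (b, w)) = scons b (err_bit w).
Proof.
apply: functional_extensionality => k; rewrite /err_bit /scons.
case: k => [|k].
  case: insubP => [i _ vi|]; last by [].
  have -> : i = ord0 by apply: val_inj.
  by rewrite ffunE unlift_none.
case: insubP => [i Hi vi|Hk].
  have Hk : (k < n)%N by rewrite -ltnS.
  rewrite insubT /=.
  have -> : i = lift ord0 (Ordinal Hk) by apply: val_inj.
  rewrite ffunE liftK /=; congr (w _); exact: val_inj.
case: insubP => // j; move: Hk; rewrite ltnS => /negP Hk Hj.
by case: Hk.
Qed.

Lemma ExS (R : realType) (p : R) n (F : (nat -> bool) -> R) :
  Ex p n.+1 F = (1 - p) * Ex p n (fun s => F (scons false s))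
               + p * Ex p n (fun s => F (scons true s)).
Proof.
rewrite /Ex (reindex (@hcons n)); last first.
  by exists (@htail n) => x _; [apply: hconsK | apply: htailK].
rewrite -(pair_big xpredT xpredT (fun b w => weight p (hcons (b, w)) * F (err_bit (hcons (b, w))))) /=.
rewrite big_bool /= addrC !mulr_sumr; congr (_ + _); apply: eq_bigr => w _;
  rewrite err_bit_hcons /weight big_ord_recl /= ffunE unlift_none mulrA; congr (_ * _ * _);
  by apply: eq_bigr => i _; rewrite ffunE liftK.
Qed.



Lemma Ex_le (R : realType) (p : R) n (F G : (nat -> bool) -> R) :
  0 <= p <= 1 -> (forall s, F s <= G s) -> Ex p n F <= Ex p n G.
Proof.
move=> /andP[p0 p1]; elim: n F G => [|n IH] F G H; first by rewrite !Ex0.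
rewrite !ExS lerD // ler_wpM2l // ?subr_ge0 //; exact: IH.
Qed.

Lemma Ex_const (R : realType) (p : R) n x : Ex p n (fun _ => x) = x.
Proof.
elim: n => [|n IH]; first by rewrite Ex0.
rewrite ExS IH; ring.
Qed.

Lemma Ex_compl (R : realType) (p : R) n (F : (nat -> bool) -> R) :
  Ex p n (fun s => 1 - F s) = 1 - Ex p n F.
Proof.
elim: n F => [|n IH] F; first by rewrite !Ex0.
rewrite !ExS (IH (fun s => F (scons false s))) (IH (fun s => F (scons true s))); ring.
Qed.

Lemma edge_loop_shift c ans fuel k cnt :
  edge_loop c ans fuel k cnt =
  ((edge_loop c (fun j => ans (j + k)%N) fuel 0 cnt).1,
   ((edge_loop c (fun j => ans (j + k)%N) fuel 0 cnt).2 + k)%N).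
Proof.
elim: fuel ans k cnt => [|f IH] ans k cnt /=.
  by case: ifP.
case: ifP => // _; rewrite add0n IH [in RHS]IH /=.
have -> : (fun j => ans (j + 1 + k)%N) = (fun j => ans (j + k.+1)%N).
  by apply: functional_extensionality => j; rewrite addn1 addnS.
by rewrite -addnA add1n.
Qed.

Lemma run_alg_shift (V : finType) c (answer : nat -> {set V} -> bool) Es fuel k :
  run_alg c answer Es fuel k =
  ((run_alg c (fun j => answer (j + k)%N) Es fuel 0).1,
   ((run_alg c (fun j => answer (j + k)%N) Es fuel 0).2 + k)%N).
Proof.
elim: Es answer fuel k => [|e Es IH] answer fuel k /=; first by [].
rewrite edge_loop_shift.
case: (edge_loop c (fun j : nat => answer (j + k)%N e) fuel 0 0) => f k' /=.
case: ifP => // _.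
rewrite IH [in RHS]IH /=.
have -> : (fun j => answer (j + (k' + k))%N) = (fun j => answer (j + k' + k)%N).
  by apply: functional_extensionality => j; rewrite addnA.
by rewrite addnA.
Qed.

Definition ansOf (V : finType) (r : {set V} -> bool) (s : nat -> bool) :=
  fun j (e : {set V}) => r e (+) s j.
Definition shift (s : nat -> bool) m := fun j => s (j + m)%N.

Definition cont (V : finType) c (r : {set V} -> bool) Es (rb : bool) fuel (cnt : int)
  (s : nat -> bool) : bool :=
  let t := edge_loop c (fun j => rb (+) s j) fuel 0 cnt in
  if t.1 == 0%N then false else (run_alg c (ansOf r (shift s t.2)) Es t.1 0).1.

Lemma run_cons (V : finType) c r e (Es : seq {set V}) fuel s :
  (run_alg c (ansOf r s) (e :: Es) fuel 0).1 = cont c r Es (r e) fuel 0 s.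
Proof.
rewrite /cont /=.
case: (edge_loop c (fun j => r e (+) s j) fuel 0 0) => f k' /=.
case: ifP => // _; by rewrite run_alg_shift.
Qed.

Lemma cont_stop (V : finType) c r (Es : seq {set V}) rb fuel cnt s :
  ~~ (cnt < c%:Z) ->
  cont c r Es rb fuel cnt s =
  if fuel == 0%N then false else (run_alg c (ansOf r s) Es fuel 0).1.
Proof.
move=> H; rewrite /cont; case: fuel => [|f] /=; rewrite (negbTE H) //=.
have -> : shift s 0 = s by apply: functional_extensionality => j; rewrite /shift addn0.
by [].
Qed.

Lemma cont_zero (V : finType) c r (Es : seq {set V}) rb cnt s :
  cnt < c%:Z -> cont c r Es rb 0 cnt s = false.
Proof. by move=> H; rewrite /cont /= H. Qed.

Lemma cont_step (V : finType) c r (Es : seq {set V}) rb f cnt s :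
  cnt < c%:Z ->
  cont c r Es rb f.+1 cnt s =
  cont c r Es rb f (if rb (+) s 0%N then cnt + 1 else cnt - 1) (fun j => s j.+1).
Proof.
move=> H; rewrite /cont /= H edge_loop_shift /=.
have -> : (fun j => rb (+) s (j + 1)%N) = (fun j => rb (+) s j.+1).
  by apply: functional_extensionality => j; rewrite addn1.
case: (edge_loop c (fun j => rb (+) s j.+1) f 0 _) => f' k' /=.
case: ifP => // _.
have -> : shift s (k' + 1) = shift (fun j => s j.+1) k'.
  by apply: functional_extensionality => j; rewrite /shift addn1 addnS.
by [].
Qed.

Lemma edge_loop_count c ans fuel k cnt :
  ((edge_loop c ans fuel k cnt).1 + (edge_loop c ans fuel k cnt).2 = fuel + k)%N.
Proof.
elim: fuel k cnt => [|f IH] k cnt /=; first by case: ifP.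
case: ifP => // _; rewrite IH; lia.
Qed.

Lemma run_alg_count (V : finType) c (answer : nat -> {set V} -> bool) Es fuel k :
  ((run_alg c answer Es fuel k).2 <= fuel + k)%N.
Proof.
elim: Es fuel k => [|e Es IH] fuel k /=; first by rewrite leq_addl.
have := edge_loop_count c (fun j => answer j e) fuel k 0.
case: (edge_loop c (fun j => answer j e) fuel k 0) => f k' /= Hc.
case: ifP => [/eqP Hf|_] /=; first by rewrite -Hc Hf.
by rewrite -Hc; apply: IH.
Qed.



Lemma Ex_ext (R : realType) (p : R) n (F G : (nat -> bool) -> R) :
  (forall s, F s = G s) -> Ex p n F = Ex p n G.
Proof. by move=> H; congr Ex; apply: functional_extensionality. Qed.

Lemma Ex_ind_le1 (R : realType) (p : R) n (F : (nat -> bool) -> bool) :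
  0 <= p <= 1 -> Ex p n (fun s => (F s)%:R) <= 1.
Proof.
move=> hp; rewrite -[X in _ <= X](Ex_const p n 1); apply: Ex_le => // s; by case: (F s); rewrite /= ?lexx ?ler01 ?ler0n ?ler1n.
Qed.

Lemma Ex_ind_ge0 (R : realType) (p : R) n (F : (nat -> bool) -> bool) :
  0 <= p <= 1 -> 0 <= Ex p n (fun s => (F s)%:R).
Proof.
move=> hp; rewrite -(Ex_const p n 0); apply: Ex_le => // s; by case: (F s); rewrite /= ?lexx ?ler01 ?ler0n ?ler1n.
Qed.

Lemma cnt_eqs (c d : nat) :
  ((c%:Z - d.+1%:Z) + 1 = c%:Z - d%:Z) /\ ((c%:Z - d.+1%:Z) - 1 = c%:Z - d.+2%:Z).
Proof. split; lia. Qed.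

Lemma discon_inner (R : realType) (p : R) (V : finType) c (r : {set V} -> bool)
  (Es : seq {set V}) (phi0 : R) :
  0 < p -> p < 1 / 2 -> 0 <= phi0 ->
  (forall fuel n, Ex p n (fun s => ((run_alg c (ansOf r s) Es fuel 0).1)%:R) <= phi0) ->
  forall rb fuel n d,
  Ex p n (fun s => (cont c r Es rb fuel (c%:Z - d%:Z) s)%:R)
    <= (if rb then phi0 else (p / (1 - p)) ^+ d).
Proof.
move=> p0 p1 phi0_ge0 HP rb fuel.
have hp : 0 <= p <= 1 by apply/andP; split; lra.
have q0 : 0 <= p / (1 - p) by apply: divr_ge0; lra.
have q1 : p / (1 - p) <= 1 by rewrite ler_pdivrMr; lra.
elim: fuel => [|f IH] n d.
  case: d => [|d].
    under Ex_ext => s do rewrite cont_stop ?subr0 ?ltxx //=.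
    rewrite Ex_const; case: rb => //; by rewrite expr0.
  under Ex_ext => s do rewrite cont_zero ?ltrBlDr ?ltrDl //=.
  rewrite Ex_const; case: rb => //; exact: exprn_ge0.
case: d => [|d].
  under Ex_ext => s do rewrite cont_stop ?subr0 ?ltxx //=.
  move: IH; case: rb => IH; first exact: HP.
  rewrite expr0; exact: Ex_ind_le1.
have Hlt : c%:Z - d.+1%:Z < c%:Z by rewrite ltrBlDr ltrDl.
have [E1 E2] := cnt_eqs c d.
case: n => [|n].
  rewrite !Ex0 cont_step //= addbF.
  have := IH 0%N (if rb then d else d.+2); rewrite Ex0.
  move: IH; case: rb => IH; rewrite ?E1 ?E2 // => H; apply: le_trans H _.
  by rewrite exprSr ler_piMr // ?exprn_ge0.
rewrite ExS.
under Ex_ext => s do rewrite cont_step //=.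
under [X in _ + p * X]Ex_ext => s do rewrite cont_step //=.
move: IH; case: rb => IH /=.
  rewrite E1 E2.
  apply: le_trans (_ : (1 - p) * phi0 + p * phi0 <= _); last by lra.
  by rewrite lerD // ler_wpM2l ?subr_ge0 //; try lra; apply: IH.
rewrite E1 E2.
apply: le_trans (_ : (1 - p) * (p / (1 - p)) ^+ d.+2 + p * (p / (1 - p)) ^+ d <= _).
  by rewrite lerD // ler_wpM2l ?subr_ge0 //; try lra; apply: IH.
have h1 : 1 - p != 0 by apply/eqP; lra.
have Hq : (1 - p) * (p / (1 - p)) ^+ 2 + p = p / (1 - p) by field.
set q := p / (1 - p) in Hq *.
have -> : (1 - p) * q ^+ d.+2 + p * q ^+ d = q ^+ d * ((1 - p) * q ^+ 2 + p) by rewrite !exprS expr0; ring.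
by rewrite Hq -exprSr.
Qed.

Lemma discon_outer (R : realType) (p : R) (V : finType) c (r : {set V} -> bool) :
  0 < p -> p < 1 / 2 ->
  forall (Es : seq {set V}) fuel n,
  Ex p n (fun s => ((run_alg c (ansOf r s) Es fuel 0).1)%:R)
    <= (if all r Es then 1 else (p / (1 - p)) ^+ c).
Proof.
move=> p0 p1; elim => [|e Es IH] fuel n /=; first by rewrite Ex_const.
under Ex_ext => s do rewrite run_cons.
have q0 : 0 <= p / (1 - p) by apply: divr_ge0; lra.
have ph0 : 0 <= (if all r Es then 1 else (p / (1 - p)) ^+ c).
  by case: ifP => _; rewrite ?ler01 ?exprn_ge0.
have := discon_inner p0 p1 ph0 IH (r e) fuel n c; rewrite subrr.
by case: (r e) => //=.
Qed.

Lemma divle (R : realType) (u v x y : R) : 0 < u -> 0 < v -> x * v <= y * u -> x / u <= y / v.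
Proof. by move=> u0 v0 H; rewrite ler_pdivrMr // mulrAC ler_pdivlMr. Qed.

Lemma con_inner (R : realType) (p : R) (V : finType) c (r : {set V} -> bool)
  (Es : seq {set V}) (phiN : nat) :
  0 < p -> p < 1 / 2 ->
  (forall fuel n, (0 < fuel)%N ->
     Ex p n (fun s => (~~ (run_alg c (ansOf r s) Es fuel 0).1)%:R)
       <= phiN%:R / ((1 - 2 * p) * fuel%:R)) ->
  forall fuel n d, (0 < fuel)%N ->
  Ex p n (fun s => (~~ cont c r Es true fuel (c%:Z - d%:Z) s)%:R)
    <= (d + phiN)%:R / ((1 - 2 * p) * fuel%:R).
Proof.
move=> p0 p1 HP fuel.
have hp : 0 <= p <= 1 by apply/andP; split; lra.
have a0 : 0 < 1 - 2 * p by lra.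
elim: fuel => [|f IH] n d Hf //.
case: d => [|d].
  under Ex_ext => s do rewrite cont_stop ?subr0 ?ltxx //=.
  by rewrite add0n; apply: HP.
have Hlt : c%:Z - d.+1%:Z < c%:Z by rewrite ltrBlDr ltrDl.
have [E1 E2] := cnt_eqs c d.
set X : R := (d + phiN)%:R.
have HX : (d.+1 + phiN)%:R = X + 1 by rewrite /X addSn -addn1 natrD.
have HX2 : (d.+2 + phiN)%:R = X + 2 by rewrite /X !addSn -addn2 natrD.
have X0 : 0 <= X by rewrite /X ler0n.
have Hf1 : (f.+1)%:R = f%:R + 1 :> R by rewrite -addn1 natrD.
rewrite HX Hf1.
have f0' : 0 <= f%:R :> R by rewrite ler0n.
case: (ltrP ((1 - 2 * p) * (f%:R + 1)) (X + 1)) => Hc.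
  apply: le_trans (@Ex_ind_le1 R p n (fun s => ~~ cont c r Es true f.+1 (c%:Z - d.+1%:Z) s) hp) _.
  rewrite ler_pdivlMr ?mul1r; [lra | nra].
have f0 : (0 < f)%N.
  case: f IH Hf Hf1 f0' Hc => // IH Hf Hf1 f0' Hc; exfalso; rewrite /= in Hc; lra.
have fpos : 0 < f%:R :> R by rewrite ltr0n.
have key1 : X / ((1 - 2 * p) * f%:R) <= (X + 1) / ((1 - 2 * p) * (f%:R + 1)).
  apply: divle; try nra.
have key2 : (1 - p) * (X / ((1 - 2 * p) * f%:R)) + p * ((X + 2) / ((1 - 2 * p) * f%:R))
    <= (X + 1) / ((1 - 2 * p) * (f%:R + 1)).
  have -> : (1 - p) * (X / ((1 - 2 * p) * f%:R)) + p * ((X + 2) / ((1 - 2 * p) * f%:R))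
     = (X + 1 - (1 - 2 * p)) / ((1 - 2 * p) * f%:R).
    have h : (1 - 2 * p) * f%:R != 0 by apply/eqP; nra.
    field; rewrite mulf_eq0 negb_or in h; by rewrite andbC.
  apply: divle; try nra.
case: n => [|n].
  rewrite !Ex0 cont_step //= E1.
  have := IH 0%N d f0; rewrite Ex0 => H; exact: le_trans H key1.
rewrite ExS.
under Ex_ext => s do rewrite cont_step //=.
under [X in _ + p * X]Ex_ext => s do rewrite cont_step //=.
rewrite E1 E2; apply: le_trans key2.
rewrite lerD // ler_wpM2l ?subr_ge0 //; try lra.
  by have := IH n d f0.
by have := IH n d.+2 f0; rewrite HX2.
Qed.

Lemma con_outer (R : realType) (p : R) (V : finType) c (r : {set V} -> bool) :
  0 < p -> p < 1 / 2 ->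
  forall (Es : seq {set V}), all r Es -> forall fuel n, (0 < fuel)%N ->
  Ex p n (fun s => (~~ (run_alg c (ansOf r s) Es fuel 0).1)%:R)
    <= (c * size Es)%:R / ((1 - 2 * p) * fuel%:R).
Proof.
move=> p0 p1; elim => [|e Es IH] /=.
  by move=> _ fuel n _; rewrite Ex_const muln0 mul0r.
move=> /andP[re rEs] fuel n Hf.
under Ex_ext => s do rewrite run_cons.
rewrite re.
have := @con_inner R p V c r Es (c * size Es) p0 p1 (IH rEs) fuel n c Hf; rewrite subrr.
by rewrite mulnS.
Qed.



Lemma c_facts (R : realType) (p : R) : 0 < p -> p < 1 / 2 ->
  (0 < c_param p (1 / 100))%N /\ (p / (1 - p)) ^+ c_param p (1 / 100) <= 1 / 100.
Proof.
move=> p0 p1.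
have gen : forall Y : R, 100 <= Y -> 1 <= 1 / 100 * Y by move=> Y HY; lra.
have h100 : (1 / 100 : R)^-1 = 100 by rewrite div1r invrK.
have y1 : 1 < (1 - p) / p by rewrite ltr_pdivlMr //; lra.
have y0 : 0 < (1 - p) / p by lra.
have lny : 0 < ln ((1 - p) / p) := ln_gt0 y1.
have ln100 : 0 < ln (100 : R) by apply: ln_gt0; lra.
set L := ln ((1 / 100 : R)^-1) / ln ((1 - p) / p).
have L0 : 0 < L by rewrite /L h100 divr_gt0.
have cL : L <= (c_param p (1 / 100))%:R.
  rewrite /c_param -/L natr_absz ger0_norm; first exact: ceil_ge.
  by rewrite ceil_ge0; lra.
split.
  rewrite lt0n; apply/negP => /eqP H; rewrite H in cL; lra.
set c := c_param p (1 / 100) in cL *.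
set y := (1 - p) / p in y1 y0 lny L cL L0.
have yc : 100 <= y ^+ c.
  have : ln 100 <= ln (y ^+ c).
    rewrite lnXn //.
    have := cL; rewrite /L h100 ler_pdivrMr // => H.
    by apply: le_trans H _; rewrite mulr_natl.
  rewrite ler_ln // posrE ?exprn_gt0 //; lra.
have -> : p / (1 - p) = y^-1 by rewrite /y invf_div.
rewrite exprVn.
have ycp : 0 < y ^+ c by apply: exprn_gt0.
rewrite -div1r ler_pdivrMr //; exact: gen.
Qed.

Lemma N_facts (R : realType) (p : R) : 0 < p -> p < 1 / 2 ->
  100 <= (1 - 2 * p) * (`|Num.ceil ((1 / 100 : R)^-1 * (1 - 2 * p)^-1)|%N)%:R.
Proof.
move=> p0 p1.
have h100 : (1 / 100 : R)^-1 = 100 by rewrite div1r invrK.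
have a0 : 0 < 1 - 2 * p by lra.
set M := (1 / 100 : R)^-1 * (1 - 2 * p)^-1.
have M0 : 0 < M by rewrite /M h100 mulr_gt0 // invr_gt0.
have HM : M <= (`|Num.ceil M|%N)%:R.
  rewrite natr_absz ger0_norm; first exact: ceil_ge.
  by rewrite ceil_ge0; lra.
have aM : (1 - 2 * p) * M = 100.
  by rewrite /M h100 mulrCA mulfV ?mulr1 //; apply/eqP; lra.
rewrite -aM; apply: ler_wpM2l => //; lra.
Qed.

Lemma nb (R : realType) (b : bool) : (b%:R : R) = 1 - (~~ b)%:R.
Proof. by case: b => /=; rewrite ?subr0 ?subrr. Qed.

Lemma nb2 (R : realType) (b : bool) : ((~~ b)%:R : R) = 1 - b%:R.
Proof. by case: b => /=; rewrite ?subr0 ?subrr. Qed.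

Lemma main_gen (R : realType) (p : R) (hp0 : 0 < p) (hp1 : p < 1 / 2) (c N : nat)
  (c0 : (0 < c)%N) (qc : (p / (1 - p)) ^+ c <= 1 / 100)
  (aN : 100 <= (1 - 2 * p) * N%:R)
  (Hc : c_param p (1 / 100) = c)
  (HBn : forall n, budget p (1 / 100) (1 / 100) n = (N * c * n)%N) :
  forall (V : finType) (E : seq {set V}) (r : {set V} -> bool),
    is_tree E ->
    let eps := 1 / 100 : R in
    let delta := 1 / 100 : R in
    (tree_connected E r ->
       Pr p (fun w => (algo p eps delta E r w).1) >= 99 / 100) /\
    (~~ tree_connected E r ->
       Pr p (fun w => ~~ (algo p eps delta E r w).1) >= 99 / 100) /\
    (forall w, ((algo p eps delta E r w).2)%:R <= ((N * c)%:R : R) * (size E)%:R).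
Proof.
move=> V E r _; cbv zeta.
have HB := HBn (size E).
have Hpr : forall ev : bool -> bool,
  Pr p (fun w => ev (algo p (1 / 100) (1 / 100) E r w).1) =
  Ex p (budget p (1 / 100) (1 / 100) (size E))
     (fun s => (ev (run_alg c (ansOf r s) E (budget p (1 / 100) (1 / 100) (size E)) 0).1)%:R).
  by move=> ev; rewrite /Pr /Ex /algo Hc.
split; [|split].
- rewrite /tree_connected => Hall.
  have := Hpr id => /= ->.
  under Ex_ext => s do rewrite nb.
  rewrite Ex_compl.
  case: (posnP (size E)) => [/eqP|] Hn.
    rewrite size_eq0 in Hn; rewrite (eqP Hn) /= Ex_const subr0; lra.
  have N0 : (0 < N)%N.
    rewrite lt0n; apply/negP => /eqP H0; move: aN; rewrite H0 mulr0; lra.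
  have Bpos : (0 < budget p (1 / 100) (1 / 100) (size E))%N.
    by rewrite HB !muln_gt0 c0 Hn N0.
  have := @con_outer R p V c r hp0 hp1 E Hall (budget p (1 / 100) (1 / 100) (size E)) (budget p (1 / 100) (1 / 100) (size E)) Bpos.
  rewrite HB => H.
  have : (c * size E)%:R / ((1 - 2 * p) * (N * c * size E)%:R) <= 1 / 100 :> R.
    have cn0 : 0 < (c * size E)%:R :> R by rewrite ltr0n muln_gt0 c0 Hn.
    rewrite -mulnA [X in _ / (_ * X)]natrM.
    move: cn0; move: ((c * size E)%:R : R) => Y Y0.
    have a0 : 0 < 1 - 2 * p by lra.
    have Npos : 0 < N%:R :> R by nra.
    rewrite ler_pdivrMr; last by apply: mulr_gt0 => //; apply: mulr_gt0.
    nra.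
  move=> H2; lra.
- rewrite /tree_connected => Hall.
  have := Hpr negb => /= ->.
  under Ex_ext => s do rewrite nb2.
  rewrite Ex_compl.
  have := @discon_outer R p V c r hp0 hp1 E (budget p (1 / 100) (1 / 100) (size E)) (budget p (1 / 100) (1 / 100) (size E)).
  rewrite (negbTE Hall) => H; lra.
- move=> w; rewrite -(natrM R) (@ler_nat R) /algo Hc.
  have := run_alg_count c (noisy_answer r w) E (budget p (1 / 100) (1 / 100) (size E)) 0.
  by rewrite addn0 -HB.
Qed.

Theorem corollary1 (R : realType) (p : R) (hp0 : 0 < p) (hp1 : p < 1 / 2) :
  exists K : R, forall (V : finType) (E : seq {set V}) (r : {set V} -> bool),
    is_tree E ->
    let eps := 1 / 100 : R in
    let delta := 1 / 100 : R in
    (tree_connected E r ->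
       Pr p (fun w => (algo p eps delta E r w).1) >= 99 / 100) /\
    (~~ tree_connected E r ->
       Pr p (fun w => ~~ (algo p eps delta E r w).1) >= 99 / 100) /\
    (forall w, ((algo p eps delta E r w).2)%:R <= K * (size E)%:R).
Proof.
have [c0 qc] := c_facts hp0 hp1.
have aN := N_facts hp0 hp1.
exists ((`|Num.ceil ((1 / 100 : R)^-1 * (1 - 2 * p)^-1)|%N) * c_param p (1 / 100))%:R.
exact: (main_gen hp0 hp1 c0 qc aN erefl (fun n => erefl)).
Qed.
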